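(* Let $Q$ be the rate matrix of an irreducible BD process on $\mathcal{M}=\{0,1\}^k$ that is reversible with respect to its limiting distribution $\pi$, with $\pi(m)>0$ for all $m$. Let $(\varepsilon_s)_{s\ge1}$ be a sequence with $\varepsilon_s>0$ and $\varepsilon_s q_i(m)\le 1$ for all $s,i,m$, satisfying $$\lim_{s\to\infty}\varepsilon_s=0\quad\text{and}\quad\sum_{s=1}^\infty\varepsilon_s=\infty.$$ Consider the time-inhomogeneous Markov chain on $\mathcal{M}$ whose transition matrix at iteration $s$ is $P_{\varepsilon_s}$ (defined below), with arbitrary initial distribution $\mu_0$, and let $\mu_s=\mu_0P_{\varepsilon_1}P_{\varepsilon_2}\cdots P_{\varepsilon_s}$ be its distribution after $s$ iterations. Then for every vector norm $\|\cdot\|$ on $\mathbb{R}^l$, $$\lim_{s\to\infty}\|\mu_s-\pi\|=0.$$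
   Context: $\mathcal{M}=\{0,1\}^k$, $l=2^k$; for $m\in\mathcal{M}$, $m^i$ is $m$ with coordinate $i$ flipped. The BD process is the continuous-time Markov chain with rate matrix $Q(m,m^i)=q_i(m)\ge0$, $Q(m,m)=-\sum_{i=1}^k q_i(m)$, $Q(m,m')=0$ otherwise. Reversibility: $\pi(m)Q(m,m')=\pi(m')Q(m',m)$ for all $m,m'$. For models $m,m'$, $H_{m,m'}$ is the set of coordinates where they differ, and for $\varepsilon>0$ $$P_\varepsilon(m,m')=\prod_{i\in H_{m,m'}} \varepsilon\, q_i(m)\prod_{i\notin H_{m,m'}}\bigl(1-\varepsilon\, q_i(m)\bigr),$$ i.e. from state $m$ each coordinate $i$ is flipped independently with probability $\varepsilon q_i(m)$. Distributions are row vectors in $\mathbb{R}^l$. *)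

(* Defs.v *)
From HB Require Import structures.
From mathcomp Require Import all_boot all_order all_algebra.
From mathcomp Require Import all_classical all_reals all_analysis.
Set Implicit Arguments. Unset Strict Implicit. Unset Printing Implicit Defensive.
Import Order.TTheory GRing.Theory Num.Theory.
Local Open Scope ring_scope.

(* The model space M = {0,1}^k, as boolean functions on 'I_k; #|M| = 2^k = l. *)
Definition model (k : nat) := {ffun 'I_k -> bool}.

Definition flip (k : nat) (m : model k) (i : 'I_k) : model k :=
  [ffun j => if j == i then ~~ m j else m j].

Section BD.
Variables (R : realType) (k : nat) (q : 'I_k -> model k -> R).

Definition rateQ (m m' : model k) : R :=
  if m' == m then - \sum_(i < k) q i m
  else \sum_(i < k) (if m' == flip m i then q i m else 0).

Definition bd_edge : rel (model k) :=
  fun m m' => [exists i : 'I_k, (m' == flip m i) && (0 < q i m)].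
Definition irreducible := forall m m' : model k, connect bd_edge m m'.

Definition is_distribution (mu : {ffun model k -> R}) :=
  (forall m, 0 <= mu m) /\ \sum_m mu m = 1.

(* stationary (= limiting, for an irreducible finite chain) distribution *)
Definition stationary (pi : {ffun model k -> R}) :=
  is_distribution pi /\ forall m', \sum_m pi m * rateQ m m' = 0.

Definition reversible (pi : {ffun model k -> R}) :=
  forall m m', pi m * rateQ m m' = pi m' * rateQ m' m.

Definition Peps (eps : R) (m m' : model k) : R :=
  \prod_(i < k) (if m i != m' i then eps * q i m else 1 - eps * q i m).

Definition step (eps : R) (mu : {ffun model k -> R}) : {ffun model k -> R} :=
  [ffun m' => \sum_m mu m * Peps eps m m'].

Fixpoint mu_iter (eps : nat -> R) (mu0 : {ffun model k -> R}) (s : nat)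
  : {ffun model k -> R} :=
  match s with
  | 0 => mu0
  | s'.+1 => step (eps s'.+1) (mu_iter eps mu0 s')
  end.
End BD.

Definition is_norm (R : realType) (V : lmodType R) (N : V -> R) :=
  [/\ forall x, N x = 0 -> x = 0,
      forall (a : R) x, N (a *: x) = `|a| * N x
    & forall x y, N (x + y) <= N x + N y].

(* Main.v *)
Require Import Defs.
From HB Require Import structures.
From mathcomp Require Import all_boot all_order all_algebra.
From mathcomp Require Import all_classical all_reals all_analysis.
From mathcomp Require Import ring lra.
Set Implicit Arguments. Unset Strict Implicit. Unset Printing Implicit Defensive.
Import Order.TTheory GRing.Theory Num.Theory.
Local Open Scope classical_set_scope.
Local Open Scope ring_scope.

Lemma Peps_row (R : realType) (k : nat) (q : 'I_k -> model k -> R) eps m :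
  \sum_m' Peps q eps m m' = 1.
Proof.
rewrite /Peps.
pose F := fun (i : 'I_k) (b : bool) => if m i != b then eps * q i m else 1 - eps * q i m.
transitivity (\prod_i \sum_b F i b).
  by rewrite bigA_distr_bigA.
rewrite big1 // => i _; rewrite big_bool /F /=; case: (m i) => /=; ring.
Qed.

Lemma prod_bounds (R : realType) (I : Type) (r : seq I) (P : pred I) (a : I -> R) :
  (forall i, 0 <= a i <= 1) ->
  [/\ 0 <= \prod_(i <- r | P i) (1 - a i),
      1 - \prod_(i <- r | P i) (1 - a i) <= \sum_(i <- r | P i) a i &
      0 <= \prod_(i <- r | P i) (1 - a i) - 1 + \sum_(i <- r | P i) a i <=
        (\sum_(i <- r | P i) a i) ^+ 2].
Proof.
move=> ha; elim: r => [|x r [IH1 IH2 /andP[IH3 IH4]]].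
  by rewrite !big_nil subrr add0r expr0n /= lexx ler01.
rewrite !big_cons; case: (P x) => //; last by rewrite IH1 IH2 IH3 IH4.
have /andP[h1 h2] := ha x.
set p := \prod_(j <- r | P j) (1 - a j) in IH1 IH2 IH3 IH4 *.
set s := \sum_(j <- r | P j) a j in IH2 IH3 IH4 *.
have hs : 0 <= s by rewrite /s sumr_ge0 // => i _; have /andP[] := ha i.
split.
- by apply: mulr_ge0 => //; lra.
- nra.
- apply/andP; split; nra.
Qed.

Lemma flipE k (m : model k) i j : flip m i j = (if j == i then ~~ m j else m j).
Proof. by rewrite /flip ffunE. Qed.

Lemma flip_neq k (m : model k) i : flip m i != m.
Proof. by apply/eqP => /ffunP /(_ i); rewrite flipE eqxx; case: (m i). Qed.

Lemma flip_inj k (m : model k) i j : (flip m i == flip m j) = (i == j).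
Proof.
apply/eqP/eqP => [/ffunP /(_ i)|->] //; rewrite !flipE eqxx.
by case: eqP => // _; case: (m i).
Qed.

Lemma rateQ_flip (R : realType) (k : nat) (q : 'I_k -> model k -> R) (m : model k) (i : 'I_k) :
  rateQ q m (flip m i) = q i m.
Proof.
rewrite /rateQ (negbTE (flip_neq m i)) (bigD1 i) //= eqxx big1 ?addr0 // => j hj.
by rewrite flip_inj eq_sym (negbTE hj).
Qed.

Lemma Peps_entry (R : realType) (k : nat) (q : 'I_k -> model k -> R) (eps : R) (m m' : model k) :
  (forall i, 0 <= eps * q i m <= 1) ->
  `|Peps q eps m m' - (m' == m)%:R - eps * rateQ q m m'| <=
     (\sum_i eps * q i m) ^+ 2.
Proof.
move=> ha.
have ha0 : forall i, 0 <= eps * q i m by move=> i; have /andP[] := ha i.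
have hS : forall i, eps * q i m <= \sum_j eps * q j m.
  move=> i; rewrite (bigD1 i) //= lerDl sumr_ge0 // => j _.
have hS0 : 0 <= \sum_j eps * q j m by rewrite sumr_ge0.
have [->|hne] := eqVneq m' m.
  have hP : Peps q eps m m = \prod_i (1 - eps * q i m).
    by apply: eq_bigr => i _; rewrite eqxx.
  have hQ : eps * rateQ q m m = - \sum_i eps * q i m.
    by rewrite /rateQ eqxx mulrN mulr_sumr.
  have [_ _ /andP[h1 h2]] := prod_bounds (index_enum 'I_k) predT ha.
  by rewrite hP hQ opprK ger0_norm.
case: (pickP (fun i => m' == flip m i)) => [i0 /eqP hi0|hno].
  subst m'.
  rewrite rateQ_flip /Peps (bigD1 i0) //= flipE eqxx.
  have -> : m i0 != ~~ m i0 by case: (m i0).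
  have -> : \prod_(i | i != i0) (if m i != flip m i0 i then eps * q i m else 1 - eps * q i m)
          = \prod_(i | i != i0) (1 - eps * q i m).
    by apply: eq_bigr => i hi; rewrite flipE (negbTE hi) eqxx.
  have [h1 h2 _] := prod_bounds (index_enum 'I_k) (fun i => i != i0) ha.
  have h3 : \sum_(i | i != i0) eps * q i m <= \sum_j eps * q j m.
    by rewrite [X in _ <= X](bigD1 i0) //= lerDr.
  have -> : (false%:R : R) = 0 by []. rewrite subr0.
  set P := \prod_(_ | _) _ in h1 h2 *.
  have hP1 : P <= 1.
    by apply: prodr_ile1 => i _; move: (ha i) => /andP[? ?]; apply/andP; split; lra.
  have -> : eps * q i0 m * P - eps * q i0 m = eps * q i0 m * (P - 1) by ring.
  rewrite normrM ger0_norm // ler0_norm; last lra.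
  rewrite expr2; apply: ler_pM => //; first lra.
  by rewrite opprB; apply: le_trans h3.
case: (pickP (fun i => m i != m' i)) => [i0 hi0|hall]; last first.
  have hmm : m' = m by apply/ffunP => i; apply/eqP; rewrite eq_sym; apply/negbFE; exact: (hall i).
  by move: hne; rewrite hmm eqxx.
case: (pickP (fun j => m' j != flip m i0 j)) => [j hj|hall]; last first.
  have hmm : m' = flip m i0 by apply/ffunP => i; apply/eqP; apply/negbFE; exact: (hall i).
  by move: (hno i0); rewrite hmm eqxx.
have hji : j != i0.
  apply/eqP => hj0; move: hj hi0; rewrite hj0 flipE eqxx.
  by case: (m i0); case: (m' i0).
have hmj : m j != m' j by move: hj; rewrite flipE (negbTE hji) eq_sym.
have hQ : rateQ q m m' = 0.
  by rewrite /rateQ (negbTE hne) big1 // => i _; rewrite hno.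
have -> : (false%:R : R) = 0 by []. rewrite hQ mulr0 !subr0 /Peps (bigD1 i0) //= (bigD1 j) //= hi0 hmj.
have h01 : 0 <= \prod_(i | (i != i0) && (i != j))
        (if m i != m' i then eps * q i m else 1 - eps * q i m) <= 1.
  have hg : forall i, 0 <= (if m i != m' i then eps * q i m else 1 - eps * q i m) <= 1.
    by move=> i; case: ifP => _; move: (ha i) => /andP[? ?]; apply/andP; split; lra.
  apply/andP; split; first by apply: prodr_ge0 => i _; have /andP[] := hg i.
  by apply: prodr_ile1 => i _; exact: hg.
move: h01 => /andP[h01 h02].
rewrite ger0_norm; last by apply: mulr_ge0 => //; apply: mulr_ge0.
have := hS i0; have := hS j; have := ha0 i0; have := ha0 j.
set P := \prod_(_ | _) _; set x := eps * q i0 m; set y := eps * q j m.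
set S := \sum_j _ .
move=> hy hx hyS hxS.
rewrite expr2; apply: ler_pM => //; first by rewrite mulr_ge0.
by rewrite -[X in _ <= X]mulr1; apply: ler_pM.
Qed.

Lemma rateQ_ge0 (R : realType) (k : nat) (q : 'I_k -> model k -> R) m m' :
  (forall i m, 0 <= q i m) -> m' != m -> 0 <= rateQ q m m'.
Proof.
move=> hq hne; rewrite /rateQ (negbTE hne) sumr_ge0 // => i _; case: ifP => //.
Qed.

Lemma rateQ_row (R : realType) (k : nat) (q : 'I_k -> model k -> R) m :
  \sum_m' rateQ q m m' = 0.
Proof.
rewrite (bigD1 m) //= /rateQ eqxx.
have -> : \sum_(m' | m' != m) (if m' == m then - \sum_i q i m
             else \sum_i (if m' == flip m i then q i m else 0))
        = \sum_(m' | m' != m) \sum_i (if m' == flip m i then q i m else 0).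
  by apply: eq_bigr => m' hm; rewrite (negbTE hm).
rewrite exchange_big /=.
have -> : \sum_i \sum_(m' | m' != m) (if m' == flip m i then q i m else 0) = \sum_i q i m.
  apply: eq_bigr => i _; rewrite (bigD1 (flip m i)) ?flip_neq //= eqxx big1 ?addr0 //.
  by move=> m' /andP[_ h]; rewrite (negbTE h).
by rewrite addNr.
Qed.

Definition Dform (R : realType) (k : nat) (q : 'I_k -> model k -> R)
  (pi : model k -> R) (f : model k -> R) :=
  \sum_m \sum_m' pi m * rateQ q m m' * (f m - f m') ^+ 2.

Lemma Dterm_ge0 (R : realType) (k : nat) (q : 'I_k -> model k -> R)
  (pi : model k -> R) (f : model k -> R) m m' :
  (forall i m, 0 <= q i m) -> (forall m, 0 < pi m) ->
  0 <= pi m * rateQ q m m' * (f m - f m') ^+ 2.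
Proof.
move=> hq hpi; have [->|hne] := eqVneq m' m; first by rewrite subrr expr0n /= mulr0.
apply: mulr_ge0; last exact: sqr_ge0.
by apply: mulr_ge0; [exact: ltW | exact: rateQ_ge0].
Qed.

Lemma Dform_ge0 (R : realType) (k : nat) (q : 'I_k -> model k -> R)
  (pi : model k -> R) (f : model k -> R) :
  (forall i m, 0 <= q i m) -> (forall m, 0 < pi m) -> 0 <= Dform q pi f.
Proof.
by move=> hq hpi; rewrite sumr_ge0 // => m _; rewrite sumr_ge0 // => m' _; apply: Dterm_ge0.
Qed.

Lemma Dform_term (R : realType) (k : nat) (q : 'I_k -> model k -> R)
  (pi : model k -> R) (f : model k -> R) a b :
  (forall i m, 0 <= q i m) -> (forall m, 0 < pi m) ->
  pi a * rateQ q a b * (f a - f b) ^+ 2 <= Dform q pi f.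
Proof.
move=> hq hpi; rewrite /Dform (bigD1 a) //= (bigD1 b) //= -addrA lerDl.
rewrite addr_ge0 // sumr_ge0 // => m _; first by apply: Dterm_ge0.
by rewrite sumr_ge0 // => m' _; apply: Dterm_ge0.
Qed.

Lemma edge_bound (R : realType) (k : nat) (q : 'I_k -> model k -> R)
  (pi : model k -> R) a b :
  (forall i m, 0 <= q i m) -> (forall m, 0 < pi m) -> bd_edge q a b ->
  exists2 c, 0 <= c & forall f, (f a - f b) ^+ 2 <= c * Dform q pi f.
Proof.
move=> hq hpi /existsP [i /andP[/eqP hb hqi]].
have hw : 0 < pi a * rateQ q a b by rewrite hb rateQ_flip mulr_gt0.
exists (pi a * rateQ q a b)^-1; first by rewrite invr_ge0 ltW.
move=> f; have h := @Dform_term _ _ q pi f a b hq hpi.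
rewrite -[X in X <= _]mul1r -(mulVf (negbT (gt_eqF hw))) -mulrA ler_wpM2l //.
by rewrite invr_ge0 ltW.
Qed.

Lemma path_bound (R : realType) (k : nat) (q : 'I_k -> model k -> R)
  (pi : model k -> R) a b :
  (forall i m, 0 <= q i m) -> (forall m, 0 < pi m) -> connect (bd_edge q) a b ->
  exists2 c, 0 <= c & forall f, (f a - f b) ^+ 2 <= c * Dform q pi f.
Proof.
move=> hq hpi /connectP [p hp ->]; elim: p a hp => [|z p IH] a /=.
  by move=> _; exists 0 => // f; rewrite subrr expr0n /= mul0r.
move=> /andP[haz hp]; have [c1 hc1 h1] := IH z hp.
have [c0 hc0 h0] := @edge_bound _ _ q pi _ _ hq hpi haz.
exists (2 * c0 + 2 * c1); first by rewrite addr_ge0 // mulr_ge0.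
move=> f; have := h0 f; have := h1 f.
have := @Dform_ge0 _ _ q pi f hq hpi.
set D := Dform q pi f; move=> hD e1 e0.
have e : (f a - f (last z p)) ^+ 2 <= 2 * (f a - f z) ^+ 2 + 2 * (f z - f (last z p)) ^+ 2.
  have := sqr_ge0 (f a - 2 * f z + f (last z p)); nra.
nra.
Qed.

Lemma unif_bound (R : realType) (k : nat) (q : 'I_k -> model k -> R)
  (pi : model k -> R) :
  (forall i m, 0 <= q i m) -> (forall m, 0 < pi m) -> irreducible q ->
  exists2 C, 0 < C & forall f a b, (f a - f b) ^+ 2 <= C * Dform q pi f.
Proof.
move=> hq hpi hirr.
suff [C hC HC] : exists2 C, 0 <= C & forall (s : model k * model k),
    forall f, (f s.1 - f s.2) ^+ 2 <= C * Dform q pi f.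
  exists (C + 1); first by rewrite ltr_pwDr.
  move=> f a b; apply: le_trans (HC (a, b) f) _.
  by apply: ler_wpM2r; [exact: Dform_ge0 | rewrite lerDl].
suff : forall s : seq (model k * model k), exists2 C, 0 <= C &
   forall p, p \in s -> forall f, (f p.1 - f p.2) ^+ 2 <= C * Dform q pi f.
  by case/(_ (enum (fun _ : model k * model k => true))) => C hC H;
     exists C => // p f; apply: H; rewrite mem_enum.
elim=> [|p s [C hC IH]]; first by exists 0.
have [c hc H] := @path_bound _ _ q pi _ _ hq hpi (hirr p.1 p.2).
exists (C + c); first by rewrite addr_ge0.
move=> p'; rewrite inE => /orP[/eqP ->|hp'] f.
  apply: le_trans (H f) _; by apply: ler_wpM2r; [exact: Dform_ge0 | rewrite lerDr].
apply: le_trans (IH p' hp' f) _; by apply: ler_wpM2r; [exact: Dform_ge0 | rewrite lerDl].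
Qed.

Definition ip (R : realType) (k : nat) (pi x y : model k -> R) :=
  \sum_m x m * y m / pi m.
Definition act (R : realType) (k : nat) (A : model k -> model k -> R) (x : model k -> R) :=
  fun m' => \sum_m x m * A m m'.

Lemma ipQ (R : realType) (k : nat) (q : 'I_k -> model k -> R) (pi x : model k -> R) :
  (forall m, 0 < pi m) ->
  (forall m m', pi m * rateQ q m m' = pi m' * rateQ q m' m) ->
  ip pi x (act (rateQ q) x) = - Dform q pi (fun m => x m / pi m) / 2.
Proof.
move=> hpi hrev; set f := fun m => x m / pi m.
have hx : forall m, x m = pi m * f m.
  by move=> m; rewrite /f mulrCA mulfV ?mulr1 // gt_eqF.
set C := \sum_m \sum_m' pi m * rateQ q m m' * (f m * f m').
have E1 : ip pi x (act (rateQ q) x) = C.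
  rewrite /C exchange_big /=; apply: eq_bigr => m' _.
  rewrite /act mulrAC -/(f m') mulr_sumr; apply: eq_bigr => m _; rewrite hx; ring.
set A := \sum_m \sum_m' pi m * rateQ q m m' * f m ^+ 2.
set B := \sum_m \sum_m' pi m * rateQ q m m' * f m' ^+ 2.
have E2 : Dform q pi f = A + B - 2 * C.
  rewrite /Dform /A /B /C mulr_sumr -big_split -sumrB; apply: eq_bigr => m _ /=.
  rewrite mulr_sumr -big_split -sumrB; apply: eq_bigr => m' _ /=; ring.
have hA : A = 0.
  rewrite /A big1 // => m _.
  transitivity (pi m * f m ^+ 2 * \sum_m' rateQ q m m'); last by rewrite rateQ_row mulr0.
  by rewrite mulr_sumr; apply: eq_bigr => m' _; ring.
have hB : B = 0.
  rewrite /B exchange_big big1 //= => m' _.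
  transitivity (pi m' * f m' ^+ 2 * \sum_m rateQ q m' m); last by rewrite rateQ_row mulr0.
  by rewrite mulr_sumr; apply: eq_bigr => m _; rewrite hrev; ring.
by rewrite E1 E2 hA hB; field.
Qed.

Lemma gap (R : realType) (k : nat) (q : 'I_k -> model k -> R) (pi : model k -> R) :
  (forall i m, 0 <= q i m) -> irreducible q ->
  (forall m, 0 < pi m) -> \sum_m pi m = 1 ->
  (forall m m', pi m * rateQ q m m' = pi m' * rateQ q m' m) ->
  exists2 g, 0 < g & forall x, \sum_m x m = 0 ->
    ip pi x (act (rateQ q) x) <= - g * ip pi x x.
Proof.
move=> hq hirr hpi hpi1 hrev.
have [C hC HC] := @unif_bound _ _ q pi hq hpi hirr.
exists C^-1; first by rewrite invr_gt0.
move=> x hx0; rewrite ipQ //.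
set f := fun m => x m / pi m.
have hx : forall m, x m = pi m * f m.
  by move=> m; rewrite /f mulrCA mulfV ?mulr1 // gt_eqF.
set D := Dform q pi f.
have hD : 0 <= D by apply: Dform_ge0.
have hip : ip pi x x = \sum_m pi m * f m ^+ 2.
  by apply: eq_bigr => m _; rewrite !hx /f; field; rewrite gt_eqF.
have hpf : \sum_m pi m * f m = 0.
  by rewrite -[RHS]hx0; apply: eq_bigr => m _; rewrite hx.
have h2 : 2 * ip pi x x = \sum_a \sum_b pi a * pi b * (f a - f b) ^+ 2.
  transitivity (\sum_a pi a * f a ^+ 2 * (\sum_b pi b) + \sum_a pi a * (\sum_b pi b * f b ^+ 2)
        - 2 * ((\sum_a pi a * f a) * (\sum_b pi b * f b))).
    have e1 : \sum_a pi a * f a ^+ 2 * (\sum_b pi b) = \sum_a pi a * f a ^+ 2.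
      by rewrite hpi1; apply: eq_bigr => a _; rewrite mulr1.
    have e2 : \sum_a pi a * (\sum_b pi b * f b ^+ 2) = \sum_a pi a * f a ^+ 2.
      by rewrite -mulr_suml hpi1 mul1r.
    by rewrite e1 e2 hpf !mulr0 subr0 hip; ring.
  rewrite mulr_suml mulr_sumr -big_split -sumrB; apply: eq_bigr => a _ /=.
  rewrite !mulr_sumr -big_split -sumrB; apply: eq_bigr => b _ /=; ring.
have h3 : \sum_a \sum_b pi a * pi b * (f a - f b) ^+ 2 <= C * D.
  apply: le_trans (_ : \sum_a \sum_b pi a * pi b * (C * D) <= _).
    apply: ler_sum => a _; apply: ler_sum => b _; apply: ler_wpM2l; last exact: HC.
    by rewrite mulr_ge0 // ltW.
  rewrite le_eqVlt; apply/orP; left; apply/eqP; transitivity (\sum_a pi a * (C * D)).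
    by apply: eq_bigr => a _; rewrite -mulr_suml -mulr_sumr hpi1 mulr1.
  by rewrite -mulr_suml hpi1 mul1r.
have hCi : 0 < C^-1 by rewrite invr_gt0.
have hCC : C * C^-1 = 1 by rewrite mulfV // gt_eqF.
move: h2 h3 hCC hCi; rewrite -/f -/D; set I := ip pi x x; set iC := C^-1.
move=> h2 h3 hCC hCi; nra.
Qed.

Lemma eqle (R : realType) (a b : R) : a = b -> a <= b.
Proof. by move=> ->. Qed.

Lemma sq_split (R : realType) (e x y : R) : 0 < e ->
  (x + y) ^+ 2 <= (1 + e) * x ^+ 2 + (1 + e^-1) * y ^+ 2.
Proof.
move=> he; have hie : e * e^-1 = 1 by rewrite mulfV // gt_eqF.
have hi : 0 < e^-1 by rewrite invr_gt0.
have := sqr_ge0 (e * x - y); set ie := e^-1 in hie hi *; nra.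
Qed.

Lemma ip_split (R : realType) (k : nat) (pi x y : model k -> R) (e : R) :
  (forall m, 0 < pi m) -> 0 < e ->
  ip pi (fun m => x m + y m) (fun m => x m + y m) <=
    (1 + e) * ip pi x x + (1 + e^-1) * ip pi y y.
Proof.
move=> hpi he; rewrite /ip !mulr_sumr -big_split /=; apply: ler_sum => m _.
have hp : 0 < (pi m)^-1 by rewrite invr_gt0.
apply: le_trans (ler_wpM2r (ltW hp) (sq_split (x m) (y m) he)) _.
by apply: eqle; rewrite !expr2; ring.
Qed.

Lemma ip_ge0 (R : realType) (k : nat) (pi x : model k -> R) :
  (forall m, 0 < pi m) -> 0 <= ip pi x x.
Proof.
move=> hpi; rewrite sumr_ge0 // => m _; rewrite -expr2 mulr_ge0 ?sqr_ge0 //.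
by rewrite invr_ge0 ltW.
Qed.

Lemma sq_sum_le (R : realType) (k : nat) (a : model k -> R) :
  (\sum_m a m) ^+ 2 <= (\sum_(m : model k) (1 : R)) * \sum_m a m ^+ 2.
Proof.
rewrite expr2 mulr_suml.
apply: le_trans (_ : \sum_i \sum_j ((a i ^+ 2 + a j ^+ 2) / 2) <= _).
  apply: ler_sum => i _; rewrite mulr_sumr; apply: ler_sum => j _.
  have := sqr_ge0 (a i - a j); nra.
apply: eqle; set n := \sum_(m : model k) (1 : R); set S := \sum_m a m ^+ 2.
have hc : forall c : R, \sum_(j : model k) c = c * n.
  by move=> c; rewrite /n mulr_sumr; apply: eq_bigr => j _; rewrite mulr1.
transitivity (\sum_i (a i ^+ 2 * n + S) / 2).
  apply: eq_bigr => i _; rewrite -mulr_suml big_split /= hc //.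
by rewrite -mulr_suml big_split /= -mulr_suml hc -/S; field.
Qed.

Lemma ip_act (R : realType) (k : nat) (pi x : model k -> R)
    (A : model k -> model k -> R) (al : R) :
  (forall m, 0 < pi m) -> (forall m, pi m <= 1) ->
  (forall m m', `|A m m'| <= al) ->
  ip pi (act A x) (act A x) <=
    al ^+ 2 * ((\sum_(m : model k) (1 : R)) * \sum_m (pi m)^-1) * ip pi x x.
Proof.
move=> hpi hpi1 hA.
set n := \sum_(m : model k) (1 : R).
have hal : 0 <= al by apply: le_trans (hA [ffun => false] [ffun => false]).
have hsx : \sum_m x m ^+ 2 <= ip pi x x.
  apply: ler_sum => m _; rewrite -expr2 -[X in X <= _]mulr1; apply: ler_wpM2l.
    exact: sqr_ge0.
  by rewrite invr_ge1 ?hpi1 // unitfE gt_eqF.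
have hpt : forall m', act A x m' ^+ 2 <= al ^+ 2 * n * ip pi x x.
  move=> m'.
  have h1 : `|act A x m'| <= al * \sum_m `|x m|.
    apply: le_trans (ler_norm_sum _ _ _) _; rewrite mulr_sumr; apply: ler_sum => m _.
    by rewrite normrM mulrC; apply: ler_wpM2r.
  have h2 : act A x m' ^+ 2 <= (al * \sum_m `|x m|) ^+ 2.
    rewrite -real_normK ?num_real // !expr2; apply: ler_pM => //.
  apply: le_trans h2 _; rewrite exprMn -mulrA; apply: ler_wpM2l; first exact: sqr_ge0.
  apply: le_trans (sq_sum_le _) _; apply: ler_wpM2l; first by rewrite sumr_ge0.
  apply: le_trans hsx; apply: eqle; apply: eq_bigr => m _.
  by rewrite real_normK ?num_real.
rewrite [X in X <= _]/ip.
apply: le_trans (_ : \sum_m' (al ^+ 2 * n * ip pi x x) * (pi m')^-1 <= _).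
  apply: ler_sum => m' _; rewrite -expr2; apply: ler_wpM2r => //.
  by rewrite invr_ge0 ltW.
by apply: eqle; rewrite -mulr_sumr; ring.
Qed.

Definition Emat (R : realType) (k : nat) (q : 'I_k -> model k -> R) (eps : R) :=
  fun m m' => Peps q eps m m' - (m' == m)%:R - eps * rateQ q m m'.

Lemma step_decomp (R : realType) (k : nat) (q : 'I_k -> model k -> R) (eps : R)
    (pi mu : model k -> R) m' :
  (forall m', \sum_m pi m * rateQ q m m' = 0) ->
  \sum_m mu m * Peps q eps m m' - pi m' =
   ((mu m' - pi m') + eps * act (rateQ q) (fun m => mu m - pi m) m') +
   (act (Emat q eps) (fun m => mu m - pi m) m' + act (Emat q eps) pi m').
Proof.
move=> hst.
have hd : \sum_m mu m * (m' == m)%:R = mu m'.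
  rewrite (bigD1 m') //= eqxx mulr1 big1 ?addr0 // => m hm.
  by rewrite eq_sym (negbTE hm) mulr0.
have : \sum_m mu m * Peps q eps m m' =
   \sum_m mu m * (m' == m)%:R + eps * (\sum_m (mu m - pi m) * rateQ q m m'
     + \sum_m pi m * rateQ q m m') + (\sum_m (mu m - pi m) * Emat q eps m m'
     + \sum_m pi m * Emat q eps m m').
  rewrite -!big_split mulr_sumr -!big_split; apply: eq_bigr => m _ /=.
  rewrite /Emat; ring.
by rewrite hst addr0 hd /act => ->; ring.
Qed.

Lemma sum_step (R : realType) (k : nat) (q : 'I_k -> model k -> R) (eps : R)
    (mu : model k -> R) :
  \sum_m' \sum_m mu m * Peps q eps m m' = \sum_m mu m.
Proof.
rewrite exchange_big; apply: eq_bigr => m _; by rewrite -mulr_sumr Peps_row mulr1.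
Qed.

Lemma rateQ_abs (R : realType) (k : nat) (q : 'I_k -> model k -> R) qs m m' :
  (forall i m, 0 <= q i m) -> (forall m, \sum_i q i m <= qs) ->
  `|rateQ q m m'| <= qs.
Proof.
move=> hq hqs; have [->|hne] := eqVneq m' m.
  by rewrite /rateQ eqxx normrN ger0_norm ?sumr_ge0.
rewrite ger0_norm ?rateQ_ge0 //; apply: le_trans (hqs m).
rewrite /rateQ (negbTE hne); apply: ler_sum => i _; case: ifP => //.
Qed.

Lemma Emat_abs (R : realType) (k : nat) (q : 'I_k -> model k -> R) qs eps m m' :
  (forall i m, 0 <= q i m) -> (forall m, \sum_i q i m <= qs) -> 0 <= eps ->
  (forall i m, eps * q i m <= 1) ->
  `|Emat q eps m m'| <= (eps * qs) ^+ 2.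
Proof.
move=> hq hqs he he1.
apply: le_trans (@Peps_entry R k q eps m m' _) _.
  by move=> i; rewrite he1 mulr_ge0.
rewrite -mulr_sumr.
have h0 : 0 <= \sum_i q i m by rewrite sumr_ge0.
have h1 : eps * \sum_i q i m <= eps * qs by apply: ler_wpM2l.
by rewrite !expr2; apply: ler_pM => //; rewrite mulr_ge0.
Qed.

Lemma ip_ext (R : realType) (k : nat) (pi x y : model k -> R) :
  (forall m, x m = y m) -> ip pi x x = ip pi y y.
Proof. by move=> h; apply: eq_bigr => m _; rewrite h. Qed.

Lemma ip_lin (R : realType) (k : nat) (pi x y : model k -> R) (c : R) :
  ip pi (fun m => x m + c * y m) (fun m => x m + c * y m) =
  ip pi x x + 2 * c * ip pi x y + c ^+ 2 * ip pi y y.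
Proof.
rewrite /ip !mulr_sumr -!big_split; apply: eq_bigr => m _ /=; ring.
Qed.

Definition cst0 (R : realType) (k : nat) (pi : model k -> R) :=
  (\sum_(m : model k) (1 : R)) * \sum_m (pi m)^-1.
Definition Verr (R : realType) (k : nat) (pi mu : model k -> R) :=
  ip pi (fun m => mu m - pi m) (fun m => mu m - pi m).

Lemma step_bound (R : realType) (k : nat) (q : 'I_k -> model k -> R)
    (pi mu : model k -> R) (eps g qs : R) :
  (forall i m, 0 <= q i m) -> (forall m, 0 < pi m) -> (forall m, pi m <= 1) ->
  \sum_m pi m = 1 -> (forall m', \sum_m pi m * rateQ q m m' = 0) ->
  0 < g -> (forall x, \sum_m x m = 0 -> ip pi x (act (rateQ q) x) <= - g * ip pi x x) ->
  (forall m, \sum_i q i m <= qs) -> 0 < eps -> (forall i m, eps * q i m <= 1) ->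
  \sum_m mu m = 1 ->
  ip pi (fun m' => \sum_m mu m * Peps q eps m m' - pi m')
        (fun m' => \sum_m mu m * Peps q eps m m' - pi m') <=
  (1 + g * eps) * ((1 - 2 * g * eps + eps ^+ 2 * (qs ^+ 2 * cst0 pi)) * Verr pi mu) +
  (1 + (g * eps)^-1) * (2 * (((eps * qs) ^+ 2) ^+ 2 * cst0 pi) * Verr pi mu +
                        2 * (((eps * qs) ^+ 2) ^+ 2 * cst0 pi)).
Proof.
move=> hq hpi hpi1 hsum hst hg hgap hqs he he1 hmu.
set c0 := cst0 pi; set V := Verr pi mu.
set e := fun m => mu m - pi m.
set a := fun m' => e m' + eps * act (rateQ q) e m'.
set b := fun m' => act (Emat q eps) e m' + act (Emat q eps) pi m'.
rewrite (ip_ext pi (y := fun m => a m + b m)); last first.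
  by move=> m'; rewrite step_decomp.
have hge : 0 < g * eps by rewrite mulr_gt0.
apply: le_trans (@ip_split R k pi a b (g * eps) hpi hge) _.
have hVe : 0 <= V by apply: ip_ge0.
have hc0 : 0 <= c0.
  by rewrite mulr_ge0 // sumr_ge0 // => m _; rewrite invr_ge0 ltW.
have hqs0 : 0 <= qs.
  by apply: le_trans (hqs [ffun => false]); rewrite sumr_ge0.
have ha : ip pi a a <= (1 - 2 * g * eps + eps ^+ 2 * (qs ^+ 2 * c0)) * V.
  rewrite /a ip_lin.
  have hse : \sum_m e m = 0 by rewrite /e sumrB hmu hsum subrr.
  have h1 := hgap e hse.
  have h2 : ip pi (act (rateQ q) e) (act (rateQ q) e) <= qs ^+ 2 * c0 * V.
    apply: ip_act => // m m'; exact: rateQ_abs.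
  have h3 : 2 * eps * ip pi e (act (rateQ q) e) <= 2 * eps * (- g * V).
    by apply: ler_wpM2l => //; rewrite mulr_ge0 // ltW.
  have h4 : eps ^+ 2 * ip pi (act (rateQ q) e) (act (rateQ q) e) <= eps ^+ 2 * (qs ^+ 2 * c0 * V).
    by apply: ler_wpM2l => //; exact: sqr_ge0.
  have hV : ip pi e e = V by [].
  rewrite hV; nra.
have hb : ip pi b b <= 2 * (((eps * qs) ^+ 2) ^+ 2 * c0) * V +
                        2 * (((eps * qs) ^+ 2) ^+ 2 * c0).
  have hE : forall m m', `|Emat q eps m m'| <= (eps * qs) ^+ 2.
    by move=> m m'; apply: Emat_abs => //; rewrite ltW.
  apply: le_trans (@ip_split R k pi _ _ 1 hpi ltr01) _.
  rewrite invr1 -/(2 : R).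
  have h1 := @ip_act R k pi e _ _ hpi hpi1 hE.
  have h2 := @ip_act R k pi pi _ _ hpi hpi1 hE.
  have hpp : ip pi pi pi = 1.
    by rewrite -hsum; apply: eq_bigr => m _; rewrite mulfK // gt_eqF.
  rewrite hpp mulr1 in h2.
  have hc : (\sum_(m : model k) (1 : R)) * \sum_m (pi m)^-1 = c0 by [].
  have hV : ip pi e e = V by [].
  rewrite hc hV in h1 h2; lra.
apply: lerD.
  by apply: ler_wpM2l => //; rewrite addr_ge0 // ltW.
by apply: ler_wpM2l => //; rewrite addr_ge0 // invr_ge0 ltW.
Qed.

Lemma arith (R : realType) (g eps qs c0 V V' : R) :
  0 < g -> 0 < eps -> eps <= 1 -> 0 <= qs -> 0 <= c0 -> 0 <= V ->
  (qs ^+ 2 * c0 * (1 + g) + 2 * qs ^+ 4 * c0 * (1 + g^-1)) * eps <= g / 2 ->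
  V' <= (1 + g * eps) * ((1 - 2 * g * eps + eps ^+ 2 * (qs ^+ 2 * c0)) * V) +
  (1 + (g * eps)^-1) * (2 * (((eps * qs) ^+ 2) ^+ 2 * c0) * V +
                        2 * (((eps * qs) ^+ 2) ^+ 2 * c0)) ->
  V' <= (1 - g / 2 * eps) * V + 2 * qs ^+ 4 * c0 * (1 + g^-1) * eps ^+ 3.
Proof.
move=> hg he he1 hqs hc0 hV hsmall hV'.
set K0 := qs ^+ 2 * c0; set K4 := 2 * qs ^+ 4 * c0.
have hK0 : 0 <= K0 by rewrite mulr_ge0 // exprn_ge0.
have hK4 : 0 <= K4 by rewrite !mulr_ge0 // exprn_ge0.
have hig : 0 < g^-1 by rewrite invr_gt0.
have t1 : 2 * (((eps * qs) ^+ 2) ^+ 2 * c0) = K4 * eps ^+ 4 by rewrite /K4; ring.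
have t2 : (1 + (g * eps)^-1) * (K4 * eps ^+ 4) = K4 * eps ^+ 4 + K4 * g^-1 * eps ^+ 3.
  by field; rewrite ?gt_eqF.
have t3 : (1 + (g * eps)^-1) * (K4 * eps ^+ 4 * V + K4 * eps ^+ 4) =
    (K4 * eps ^+ 4 + K4 * g^-1 * eps ^+ 3) * (V + 1) by rewrite -t2; ring.
rewrite t1 t3 in hV'.
set ig := g^-1 in hsmall hig hV' *.
have e32 : eps ^+ 3 <= eps ^+ 2.
  by rewrite exprS -[X in _ <= X]mul1r ler_wpM2r ?exprn_ge0 // ltW.
have e43 : eps ^+ 4 <= eps ^+ 3.
  by rewrite (exprS _ 3) -[X in _ <= X]mul1r ler_wpM2r ?exprn_ge0 // ltW.
have e42 := le_trans e43 e32.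
have b1 : g * K0 * eps ^+ 3 <= g * K0 * eps ^+ 2.
  by apply: ler_wpM2l e32; rewrite mulr_ge0 // ltW.
have b2 : K4 * eps ^+ 4 <= K4 * eps ^+ 2 by apply: ler_wpM2l.
have b3 : K4 * ig * eps ^+ 3 <= K4 * ig * eps ^+ 2.
  by apply: ler_wpM2l e32; rewrite mulr_ge0 // ltW.
have b4 : K4 * eps ^+ 4 <= K4 * eps ^+ 3 by apply: ler_wpM2l.
have hs2 : eps * ((K0 * (1 + g) + K4 * (1 + ig)) * eps) <= eps * (g / 2).
  by apply: ler_wpM2l => //; rewrite ltW.
have br : 0 <= g * eps / 2 + 2 * g ^+ 2 * eps ^+ 2 - K0 * eps ^+ 2 - g * K0 * eps ^+ 3
                - K4 * eps ^+ 4 - K4 * ig * eps ^+ 3.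
  have : 0 <= 2 * g ^+ 2 * eps ^+ 2 by rewrite !mulr_ge0 // ?exprn_ge0 // ltW.
  rewrite !expr2 in hs2 *; rewrite !exprS !expr0 in b1 b2 b3 *; lra.
have hbr := mulr_ge0 br hV.
move: hbr b4 hV'; rewrite /K0 /K4 !exprS !expr0 => hbr b4 hV'; lra.
Qed.

Lemma seq_conv (R : realType) (V ep : nat -> R) (c K t0 : R) :
  0 < c -> 0 <= K -> 0 < t0 ->
  (forall s, 0 <= V s) ->
  (forall s, (1 <= s)%N -> 0 < ep s) ->
  (forall d, 0 < d -> exists N, forall s, (N <= s)%N -> ep s < d) ->
  (forall M, exists N, forall n, (N <= n)%N -> M <= \sum_(1 <= s < n.+1) ep s) ->
  (forall s, ep s.+1 <= t0 -> ep s.+1 <= 1 ->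
     V s.+1 <= (1 - c * ep s.+1) * V s + K * ep s.+1 ^+ 3) ->
  forall d, 0 < d -> exists N, forall s, (N <= s)%N -> V s <= d.
Proof.
move=> hc hK ht0 hV hep hep0 hT H d hd.
have hK1 : 0 < K + 1 by rewrite ltr_wpDl.
have [N1 h1] := hep0 t0 ht0.
have [N2 h2] := hep0 c^-1 (ltac:(by rewrite invr_gt0)).
have [N3 h3] := hep0 1 ltr01.
have hd' : 0 < c * d / (2 * (K + 1)) by rewrite !(mulr_gt0, invr_gt0) // ltr0n.
have [N4 h4] := hep0 _ hd'.
set S1 := maxn N1 (maxn N2 (maxn N3 N4)).
have hstep : forall s, (S1 <= s)%N ->
   [/\ V s.+1 <= (1 - c * ep s.+1) * V s + c * ep s.+1 * (d / 2),
       0 < c * ep s.+1 & c * ep s.+1 <= 1].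
  move=> s hs.
  have hs' : (S1 <= s.+1)%N by apply: leq_trans hs _.
  have e0 := hep s.+1 isT.
  have e1 := h1 s.+1 (leq_trans (leq_maxl _ _) hs').
  have e2 := h2 s.+1 (leq_trans (leq_trans (leq_maxl _ _) (leq_maxr _ _)) hs').
  have e3 := h3 s.+1 (leq_trans (leq_trans (leq_maxl _ _) (leq_trans (leq_maxr _ _) (leq_maxr _ _))) hs').
  have e4 := h4 s.+1 (leq_trans (leq_trans (leq_maxr _ _) (leq_trans (leq_maxr _ _) (leq_maxr _ _))) hs').
  have H1 := H s (ltW e1) (ltW e3).
  set x := ep s.+1 in e0 e1 e2 e3 e4 H1 *.
  have f2 : c * x < 1 by rewrite -(mulfV (negbT (gt_eqF hc))) ltr_pM2l.
  have f4 : (K + 1) * x <= c * d / 2.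
    have : (K + 1) * x <= (K + 1) * (c * d / (2 * (K + 1))).
      by rewrite ler_wpM2l ?ltW.
    move=> h; apply: le_trans h _; apply: eqle; field; rewrite gt_eqF //.
  have f5 : K * x ^+ 3 <= c * x * (d / 2).
    have g1 : x ^+ 2 <= x by rewrite expr2 -[X in _ <= X]mul1r ler_wpM2r // ltW.
    have g2 : K * x ^+ 2 <= K * x by rewrite ler_wpM2l.
    have g3 : x * (K * x ^+ 2) <= x * (c * d / 2) by rewrite ler_wpM2l ?ltW //; lra.
    by move: g3; rewrite !exprS expr0; lra.
  split; [lra| by rewrite mulr_gt0 | lra].
have hstay : forall s, (S1 <= s)%N -> V s <= d -> V s.+1 <= d.
  move=> s hs hVs; have [a1 a2 a3] := hstep s hs.
  set y := c * ep s.+1 in a1 a2 a3.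
  have : (1 - y) * V s <= (1 - y) * d by rewrite ler_wpM2l // subr_ge0.
  have : 0 <= y * d by rewrite mulr_ge0 // ltW.
  lra.
have [s0 [hs0 hVs0]] : exists s0, (S1 <= s0)%N /\ V s0 <= d.
  apply: contrapT => hno.
  have hgt : forall s, (S1 <= s)%N -> d < V s.
    by move=> s hs; rewrite ltNge; apply/negP => h; apply: hno; exists s.
  set T := fun n => \sum_(1 <= s < n.+1) ep s.
  have hdec : forall n, V (S1 + n)%N <= V S1 - c * (d / 2) * (T (S1 + n)%N - T S1).
    elim=> [|n IH]; first by rewrite addn0 subrr mulr0 subr0.
    have hs : (S1 <= S1 + n)%N by rewrite leq_addr.
    have [a1 a2 a3] := hstep _ hs.
    have hT1 : T (S1 + n.+1)%N = T (S1 + n)%N + ep (S1 + n)%N.+1.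
      by rewrite /T addnS big_nat_recr.
    have hv := hgt _ hs.
    rewrite hT1 addnS.
    set y := ep (S1 + n)%N.+1 in a1 a2 a3 *.
    have : c * y * (d / 2) <= c * y * (V (S1 + n)%N - d / 2).
      by rewrite ler_wpM2l ?ltW //; lra.
    lra.
  have [N hN] := hT (T S1 + 2 * V S1 / (c * d) + 1).
  have := hdec N; have := hN (S1 + N)%N (leq_addl _ _); rewrite -/(T _).
  have := hV (S1 + N)%N.
  set A := T (S1 + N)%N; set B := T S1; set W := V S1; set W' := V (S1 + N)%N.
  move=> hW' hA hdecN.
  have hcd : 0 < c * d by rewrite mulr_gt0.
  have : c * (d / 2) * (B + 2 * W / (c * d) + 1 - B) <= c * (d / 2) * (A - B).
    have hcd2 : 0 <= c * (d / 2) by rewrite mulr_ge0 // ?divr_ge0 // ltW.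
    by apply: (ler_wpM2l hcd2); lra.
  have -> : c * (d / 2) * (B + 2 * W / (c * d) + 1 - B) = W + c * d / 2.
    by field; rewrite !gt_eqF.
  have : 0 < c * d / 2 by rewrite divr_gt0.
  lra.
exists s0 => s hs; rewrite -(subnKC hs).
elim: (s - s0)%N => [|n IH]; first by rewrite addn0.
by rewrite addnS; apply: hstay => //; rewrite (leq_trans hs0) ?leq_addr.
Qed.

Lemma norm_ge0 (R : realType) (k : nat) (N : {ffun model k -> R} -> R) :
  is_norm N -> (N 0 = 0) /\ forall x, 0 <= N x.
Proof.
case=> h0 hZ hT.
have N0 : N 0 = 0 by have := hZ 0 0; rewrite scale0r normr0 mul0r.
split => // x; have := hT x ((-1) *: x).
rewrite hZ normrN normr1 mul1r scaleN1r addrN N0 => h; lra.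
Qed.

Lemma norm_bound (R : realType) (k : nat) (N : {ffun model k -> R} -> R) :
  is_norm N -> forall x : {ffun model k -> R},
  N x <= \sum_m `|x m| * N [ffun m' => (m' == m)%:R].
Proof.
move=> hN x; have [N0 _] := norm_ge0 hN; case: hN => h0 hZ hT.
have hx : x = \sum_m x m *: [ffun m' => (m' == m)%:R :> R].
  have sc : forall a b : R, a *: b = a * b by [].
  apply/ffunP => m0; rewrite sum_ffunE (bigD1 m0) //= !ffunE eqxx /= sc mulr1 big1 ?addr0 //.
  by move=> m hm; rewrite !ffunE eq_sym (negbTE hm) /= sc mulr0.
rewrite {1}hx; apply: (big_ind2 (fun v r => N v <= r)).
- by rewrite N0.
- move=> v1 r1 v2 r2 h1 h2; apply: le_trans (hT _ _) _; exact: lerD.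
- by move=> m _; rewrite hZ.
Qed.

Lemma coord_le_ip (R : realType) (k : nat) (pi x : model k -> R) m :
  (forall m, 0 < pi m) -> (forall m, pi m <= 1) -> x m ^+ 2 <= ip pi x x.
Proof.
move=> hpi hpi1.
have ht : forall m, 0 <= x m * x m / pi m.
  by move=> m'; rewrite -expr2 mulr_ge0 ?sqr_ge0 // invr_ge0 ltW.
apply: le_trans (_ : x m * x m / pi m <= _).
  rewrite expr2 -[X in X <= _]mulr1; apply: ler_wpM2l; first by rewrite -expr2 sqr_ge0.
  by rewrite invr_ge1 ?hpi1 // unitfE gt_eqF.
by rewrite /ip (bigD1 m) //= lerDl sumr_ge0.
Qed.

Lemma ev_iff (P : nat -> Prop) :
  (\forall n \near \oo, P n) <-> exists N, forall n, (N <= n)%N -> P n.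
Proof.
split.
- move=> [N _ H]; exists N => n Hn; exact: H.
- move=> [N H]; exists N => // n Hn; exact: H.
Qed.

Unset Implicit Arguments.

Theorem theorem3p2 (R : realType) (k : nat) (q : 'I_k -> model k -> R)
  (pi : {ffun model k -> R}) (eps : nat -> R) (mu0 : {ffun model k -> R})
  (N : {ffun model k -> R} -> R) :
  (forall i m, 0 <= q i m) ->
  irreducible q ->
  stationary q pi ->
  reversible q pi ->
  (forall m, 0 < pi m) ->
  (forall s, (1 <= s)%N -> 0 < eps s) ->
  (forall s i m, (1 <= s)%N -> eps s * q i m <= 1) ->
  eps @ \oo --> 0 ->
  (fun n => \sum_(1 <= s < n.+1) eps s) @ \oo --> +oo ->
  is_distribution mu0 ->
  is_norm N ->
  (fun s => N (mu_iter q eps mu0 s - pi)) @ \oo --> 0.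
Proof.
move=> hq hirr [[hpi0 hpi1] hst] hrev hpi heps heps1 hcvg hsum hmu0 hN.
have hpile1 : forall m, pi m <= 1.
  by move=> m; rewrite -hpi1 (bigD1 m) //= lerDl sumr_ge0.
have [g hg hgap] := @gap R k q pi hq hirr hpi hpi1 hrev.
set qs := \sum_m \sum_i q i m.
have hqs : forall m, \sum_i q i m <= qs.
  move=> m; rewrite /qs (bigD1 m) //= lerDl sumr_ge0 // => m' _.
  by rewrite sumr_ge0.
have hqs0 : 0 <= qs by rewrite /qs !sumr_ge0 // => m _; rewrite sumr_ge0.
set c0 := cst0 pi.
have hc0 : 0 <= c0.
  by rewrite /c0 /cst0 mulr_ge0 ?sumr_ge0 // => m _; rewrite invr_ge0 ltW.
have hig : 0 < g^-1 by rewrite invr_gt0.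
set L := qs ^+ 2 * c0 * (1 + g) + 2 * qs ^+ 4 * c0 * (1 + g^-1).
have hL : 0 <= L.
  have a1 : 0 <= qs ^+ 2 * c0 by apply: mulr_ge0 => //; apply: exprn_ge0.
  have a2 : 0 <= 2 * qs ^+ 4 * c0.
    by apply: mulr_ge0 => //; apply: mulr_ge0 => //; apply: exprn_ge0.
  by rewrite /L; apply: addr_ge0; apply: mulr_ge0 => //; lra.
set t0 := g / 2 / (L + 1).
have hL1 : 0 < L + 1 by apply: (le_lt_trans hL); rewrite ltrDl ltr01.
have ht0 : 0 < t0 by rewrite /t0 !divr_gt0.
set K := 2 * qs ^+ 4 * c0 * (1 + g^-1).
have hK : 0 <= K.
  have a2 : 0 <= 2 * qs ^+ 4 * c0.
    by apply: mulr_ge0 => //; apply: mulr_ge0 => //; apply: exprn_ge0.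
  by rewrite /K; apply: mulr_ge0 => //; lra.
set mu := mu_iter q eps mu0.
have hmusum : forall s, \sum_m mu s m = 1.
  elim=> [|s IH] /=; first by case: hmu0.
  rewrite -[RHS]IH -(sum_step q (eps s.+1) (mu s)).
  by apply: eq_bigr => m' _; rewrite /step ffunE.
set V := fun s => Verr pi (mu s).
have hrec : forall s, eps s.+1 <= t0 -> eps s.+1 <= 1 ->
    V s.+1 <= (1 - g / 2 * eps s.+1) * V s + K * eps s.+1 ^+ 3.
  move=> s h1 h2.
  have e0 := heps s.+1 isT.
  have hsb := @step_bound R k q pi (mu s) (eps s.+1) g qs hq hpi hpile1 hpi1 hst hg hgap
     hqs e0 (fun i m => heps1 s.+1 i m isT) (hmusum s).
  have hVs : V s.+1 = ip pi (fun m' => \sum_m mu s m * Peps q (eps s.+1) m m' - pi m')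
                           (fun m' => \sum_m mu s m * Peps q (eps s.+1) m m' - pi m').
    by rewrite /V /Verr; apply: ip_ext => m'; rewrite /= /step ffunE.
  rewrite hVs; apply: arith hsb => //.
    exact: ip_ge0.
  rewrite -/L; apply: le_trans (_ : (L + 1) * t0 <= _).
    by apply: (ler_pM hL (ltW e0)) => //; rewrite lerDl.
  by apply: eqle; rewrite /t0; field; rewrite gt_eqF.
have hep0 : forall d, 0 < d -> exists N, forall s, (N <= s)%N -> eps s < d.
  move=> d hd; have h : \forall t \near \oo, `|0 - eps t| < d.
    by move: hcvg => /cvgrPdist_lt; apply.
  have [N0 HN0] := (ev_iff (fun t => `|0 - eps t| < d)).1 h; exists N0 => s hs; apply: le_lt_trans (HN0 s hs).
  by rewrite sub0r normrN ler_norm.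
have hT : forall M, exists N, forall n, (N <= n)%N -> M <= \sum_(1 <= s < n.+1) eps s.
  by move=> M; apply/ev_iff; exact: ((cvgryPge _).1 hsum M).
have hg2 : 0 < g / 2 by rewrite divr_gt0.
have hVge : forall s, 0 <= V s by move=> s; exact: ip_ge0.
have conv := @seq_conv R V eps (g / 2) K t0 hg2 hK ht0 hVge heps hep0 hT hrec.
have [hN0 hNge] := norm_ge0 hN.
apply/cvgrPdist_lt => e he; apply/ev_iff.
set B := \sum_m N [ffun m' => (m' == m)%:R].
have hB : 0 <= B by rewrite sumr_ge0.
have hB1 : 0 < B + 1 by apply: (le_lt_trans hB); rewrite ltrDl ltr01.
set eta := e / (B + 1).
have heta : 0 < eta by rewrite divr_gt0.
have [S HS] := conv (eta ^+ 2) (exprn_gt0 2 heta).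
exists S => s hs.
rewrite sub0r normrN ger0_norm //.
apply: le_lt_trans (norm_bound hN _) _.
apply: le_lt_trans (_ : \sum_m eta * N [ffun m' => (m' == m)%:R] < _).
  apply: ler_sum => m _; apply: ler_wpM2r => //.
  have h1 : (mu s - pi) m ^+ 2 <= eta ^+ 2.
    apply: le_trans (HS s hs); rewrite /V /Verr.
    rewrite !ffunE; exact: (@coord_le_ip R k pi (fun m => mu s m - pi m) m hpi hpile1).
  move: h1; rewrite -real_normK ?num_real //; set z := `|_|.
  have : 0 <= z by apply: normr_ge0.
  move=> hz h1; rewrite leNgt; apply/negP => hlt.
  have : eta * eta < z * z by apply: ltr_pM => //; exact: ltW.
  rewrite !expr2 in h1; lra.
rewrite -mulr_sumr -/B /eta.
have -> : e / (B + 1) * B = e - e / (B + 1) by field; rewrite gt_eqF.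
by rewrite ltrBlDr ltrDl divr_gt0.
Qed.
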